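(* Let $\mathcal{F}=(W,\preceq,\mathcal{V})$ be a finite poset model and $B\subseteq W\times W$ a weak $\pm$-bisimulation. For all $w_1,w_2$ with $B(w_1,w_2)$ and every $\uparrow\!\downarrow$-path $\pi_1:[0;2h]\to W$ from $w_1$, there is a $\downarrow$-path $\pi_2:[0;k]\to W$ from $w_2$ such that $B(\pi_1(2h),\pi_2(k))$ and for each $j\in[0;k)$ there is $i\in[0;2h)$ with $B(\pi_1(i),\pi_2(j))$.
   Context: Fix a set PL of proposition letters. A poset model is $\mathcal{F}=(W,\preceq,\mathcal{V})$ with $(W,\preceq)$ a partial order and $\mathcal{V}:\mathrm{PL}\to\mathcal{P}(W)$. $[m;n]=\{i\in\mathbb{N}:m\le i\le n\}$, $[m;n)=\{i:m\le i<n\}$. An undirected path of length $\ell$ from $w$ is $\pi:[0;\ell]\to W$ with $\pi(0)=w$ and, for each $i\in[0;\ell)$, $\pi(i)\preceq\pi(i+1)$ or $\pi(i+1)\preceq\pi(i)$. A $\downarrow$-path is an undirected path of length $\ell\ge1$ with $\pi(\ell)\preceq\pi(\ell-1)$. A $\pm$-path is a $\downarrow$-path of length $\ell\ge2$ with $\pi(0)\preceq\pi(1)$. An $\uparrow\!\downarrow$-path of length $2h$ ($h\ge1$) satisfies $\pi(2i)\preceq\pi(2i+1)\succeq\pi(2i+2)$ for all $i\in[0;h)$. A weak $\pm$-bisimulation is a symmetric relation $B\subseteq W\times W$ such that whenever $B(w_1,w_2)$: (1) for every $p\in\mathrm{PL}$, $w_1\in\mathcal{V}(p)$ iff $w_2\in\mathcal{V}(p)$;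 (2) for all $u_1,d_1\in W$ with ($w_1\preceq u_1$ or $u_1\preceq w_1$) and $d_1\preceq u_1$, there is a $\pm$-path $\pi_2:[0;\ell_2]\to W$ from $w_2$ with $B(d_1,\pi_2(\ell_2))$ and, for all $j\in[0;\ell_2)$, $B(w_1,\pi_2(j))$ or $B(u_1,\pi_2(j))$. *)

(* Defs.v *)
From mathcomp Require Import all_boot.
Set Implicit Arguments. Unset Strict Implicit. Unset Printing Implicit Defensive.

Definition is_partial_order (W : Type) (le : W -> W -> Prop) : Prop :=
  (forall x, le x x) /\
  (forall x y, le x y -> le y x -> x = y) /\
  (forall x y z, le x y -> le y z -> le x z).

(* Paths are functions nat -> W; only the values on [0; l] are relevant. *)
Definition undirected_path (W : Type) (le : W -> W -> Prop)
    (pi : nat -> W) (l : nat) (w : W) : Prop :=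
  pi 0 = w /\ forall i, i < l -> le (pi i) (pi i.+1) \/ le (pi i.+1) (pi i).

Definition down_path (W : Type) (le : W -> W -> Prop)
    (pi : nat -> W) (l : nat) (w : W) : Prop :=
  undirected_path le pi l w /\ 1 <= l /\ le (pi l) (pi l.-1).

Definition pm_path (W : Type) (le : W -> W -> Prop)
    (pi : nat -> W) (l : nat) (w : W) : Prop :=
  down_path le pi l w /\ 2 <= l /\ le (pi 0) (pi 1).

Definition updown_path (W : Type) (le : W -> W -> Prop)
    (pi : nat -> W) (h : nat) (w : W) : Prop :=
  1 <= h /\ pi 0 = w /\
  forall i, i < h -> le (pi (2 * i)) (pi (2 * i).+1) /\ le (pi (2 * i).+2) (pi (2 * i).+1).

Definition weak_pm_bisimulation (PL W : Type) (le : W -> W -> Prop)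
    (V : PL -> W -> Prop) (B : W -> W -> Prop) : Prop :=
  (forall x y, B x y -> B y x) /\
  forall w1 w2, B w1 w2 ->
    (forall p : PL, V p w1 <-> V p w2) /\
    (forall u1 d1, (le w1 u1 \/ le u1 w1) -> le d1 u1 ->
       exists (pi2 : nat -> W) (l2 : nat),
         pm_path le pi2 l2 w2 /\ B d1 (pi2 l2) /\
         forall j, j < l2 -> B w1 (pi2 j) \/ B u1 (pi2 j)).

(* Main.v *)
Require Import Defs.
From mathcomp Require Import all_boot.
From mathcomp Require Import zify.

Lemma aux (PL : Type) (W : finType) (le : W -> W -> Prop)
    (V : PL -> W -> Prop) (B : W -> W -> Prop) :
  weak_pm_bisimulation le V B ->
  forall n (w1 w2 : W) (pi1 : nat -> W), B w1 w2 -> updown_path le pi1 n.+1 w1 ->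
  exists (pi2 : nat -> W) (k : nat),
    down_path le pi2 k w2 /\ B (pi1 (2 * n.+1)) (pi2 k) /\
    forall j, j < k -> exists i, i < 2 * n.+1 /\ B (pi1 i) (pi2 j).
Proof.
move=> [_ Hb]; elim=> [|n IH] w1 w2 pi1 Bw [_ [E0 Hud]].
- have [H1 H2] := Hud 0 isT.
  have [_ Hs] := Hb _ _ Bw.
  rewrite E0 in H1 H2.
  have [pi2 [l2 [[Hd _] [Hl Hj]]]] := Hs (pi1 1) (pi1 2) (or_introl H1) H2.
  exists pi2, l2; split; first exact: Hd.
  split; first exact: Hl.
  move=> j /Hj [Hx|Hx]; [exists 0 | exists 1]; rewrite ?E0; by split.
- have [H1 H2] := Hud 0 isT.
  have [_ Hs] := Hb _ _ Bw.
  rewrite E0 in H1 H2.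
  have [pi2 [l2 [[[[P0 Pu] [Pl1 Pd]] _] [Hl Hj]]]] := Hs (pi1 1) (pi1 2) (or_introl H1) H2.
  have Hud' : updown_path le (fun i => pi1 i.+2) n.+1 (pi1 2).
    split; first by []. split; first by [].
    move=> i Hi; have := Hud i.+1 Hi.
    by rewrite !mulnS !addSn !add0n.
  have [rho [k [[[R0 Ru] [Rk1 Rd]] [Rl Rj]]]] := IH _ _ _ Hl Hud'.
  exists (fun j => if j <= l2 then pi2 j else rho (j - l2)), (l2 + k).
  split; [split; [split|split]|split].
  + by rewrite leq0n.
  + move=> i Hi.
    case: (ltnP i l2) => Hil.
    * by rewrite (ltnW Hil); apply: Pu.
      case: (leqP i l2) => Hil2.
      - have Ei : i = l2 by lia.
        subst i; rewrite subSnn -R0; by apply: Ru; lia.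
      - rewrite subSn; last lia. apply: Ru; lia.
  + lia.
  + have -> : (l2 + k <= l2) = false by lia.
    have -> : (l2 + k).-1 - l2 = k.-1 by lia.
    case: (leqP (l2 + k).-1 l2) => Hc.
    * have Ek : k = 1 by lia.
      subst k. have -> : (l2 + 1).-1 = l2 by lia.
      by rewrite -R0 addKn.
    * by rewrite addKn.
  + have -> : (l2 + k <= l2) = false by lia.
    rewrite addKn. move: Rl. by rewrite !mulnS !addSn !add0n.
  + move=> j Hj'.
    case: (ltnP j l2) => Hjl.
    * rewrite (ltnW Hjl). have [Hx|Hx] := Hj j Hjl; [exists 0 | exists 1]; rewrite ?E0; split=> //; lia.
    * case: (leqP j l2) => Hjl2.
      - have Ej : j = l2 by lia. subst j.
        have [i [Hi Bi]] := Rj 0 ltac:(lia).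
        exists i.+2; split; first lia. by rewrite -R0.
      - have [i [Hi Bi]] := Rj (j - l2) ltac:(lia).
        exists i.+2; split; first lia. exact: Bi.
Qed.

Theorem lemma7 (PL : Type) (W : finType) (le : W -> W -> Prop)
    (V : PL -> W -> Prop) (B : W -> W -> Prop) :
  is_partial_order le ->
  weak_pm_bisimulation le V B ->
  forall (w1 w2 : W), B w1 w2 ->
  forall (pi1 : nat -> W) (h : nat), updown_path le pi1 h w1 ->
  exists (pi2 : nat -> W) (k : nat),
    down_path le pi2 k w2 /\ B (pi1 (2 * h)) (pi2 k) /\
    forall j, j < k -> exists i, i < 2 * h /\ B (pi1 i) (pi2 j).
Proof.
move=> _ Hb w1 w2 Bw pi1 [|n] Hu; first by case: Hu.
exact: (@aux PL W le V B Hb n w1 w2 pi1 Bw Hu).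
Qed.
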